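(* Let $R,R',R''$ be Hecke symmetries with the same parameter $q$ on finite dimensional spaces $V,V',V''$. Suppose that for each $n>1$ every indecomposable direct summand of the $\mathcal H_n$-module $V'^{\otimes n}$ is isomorphic to a direct summand of the $\mathcal H_n$-module $V^{\otimes n}$. Then the algebra homomorphism $\Delta_{R',R,R''}$ gives an isomorphism of algebras $A(R',R'')\cong A(R',R)\,\square_{A(R)}\,A(R,R'')$.
   Context: A Hecke symmetry with parameter $0\neq q\in\Bbbk$ on $V$ is an operator $R$ on $V\otimes V$ with $(R+\mathrm{id})(R-q\,\mathrm{id})=0$ and the braid relation; $V^{\otimes n}$ becomes an $\mathcal H_n(q)$-module with $T_i$ acting by $R$ on positions $i,i+1$. For Hecke symmetries $R_1,R_2$ (same $q$) on $W_1,W_2$, $A(R_2,R_1)$ is the quotient of $\mathbb T(W_2^*\otimes W_1)$ by the ideal generated by $\operatorname{Im}(\mathcal R-\mathrm{id})$, where $\mathcal R$ corresponds to $(R_2^* )^{-1}\otimes R_1$ under $(W_2^*\otimes W_1)^{\otimes2}\cong(W_2^* )^{\otimes2}\otimes W_1^{\otimes2}$ ($R_2^*$ the adjoint of $R_2$); one has $A_n(R_2,R_1)\cong\operatorname{Hom}_{\mathcal H_n}(W_1^{\otimes n},W_2^{\otimes n})^*$. $A(R)=A(R,R)$. The map $\Delta_{R',R,R''}:A(R',R'')\to A(R',R)\otimes A(R,R'')$ is defined in each degree $n$ as the map dual to composition $\operatorname{Hom}_{\mathcal H_n}(V^{\otimes n},V'^{\otimes n})\otimes\operatorname{Hom}_{\mathcal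 H_n}(V''^{\otimes n},V^{\otimes n})\to\operatorname{Hom}_{\mathcal H_n}(V''^{\otimes n},V'^{\otimes n})$; it is an algebra homomorphism, $A(R)$ is a bialgebra with comultiplication $\Delta_{R,R,R}$, and $A(R',R)$, $A(R,R'')$ are a right, resp. left, $A(R)$-comodule via $\Delta_{R',R,R}$, resp. $\Delta_{R,R,R''}$. For a coalgebra $C$, right comodule $X$ (coaction $\rho$) and left comodule $Y$ (coaction $\lambda$), the cotensor product $X\square_CY$ is the kernel of $\rho\otimes\mathrm{id}-\mathrm{id}\otimes\lambda:X\otimes Y\to X\otimes C\otimes Y$. *)

(* Defs.v *)
From HB Require Import structures.
From mathcomp Require Import all_boot all_order all_algebra.
Set Implicit Arguments. Unset Strict Implicit. Unset Printing Implicit Defensive.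
Import GRing.Theory.
Local Open Scope ring_scope.

(* Conventions: V = K^d, V^{(x)n} = K^(d^n); a linear operator on a space K^m
   is a square matrix acting on ROW vectors (v |-> v *m A), as in MathComp.
   Basis of a tensor product K^m (x) K^n = K^(m*n): e_i (x) e_j = e_(mxvec_index i j). *)

Section Defs.
Variable K : fieldType.

Definition kron m1 n1 m2 n2 (A : 'M[K]_(m1, n1)) (B : 'M[K]_(m2, n2))
  : 'M[K]_(m1 * m2, n1 * n2) :=
  \matrix_(i, j) \sum_(i1 < m1) \sum_(i2 < m2) \sum_(j1 < n1) \sum_(j2 < n2)
     (if (i == mxvec_index i1 i2) && (j == mxvec_index j1 j2)
      then A i1 j1 * B i2 j2 else 0).

(* The operator by which T_(i+1) (0-based i, acting on tensor positions i, i+1)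
   of the Hecke algebra H_n acts on V^{(x)n}, for R an operator on V (x) V:
   id_{V^{(x)i}} (x) R (x) id_{V^{(x)(n-i-2)}}  (meaningful for i + 2 <= n). *)
Definition heckeT (d n i : nat) (R : 'M[K]_(d * d)) : 'M[K]_(d ^ n) :=
  conform_mx 0 (kron (kron (1%:M : 'M[K]_(d ^ i)) R)
                     (1%:M : 'M[K]_(d ^ (n - i.+2)))).
Arguments heckeT {d} n i R.

Definition hecke_symmetry (d : nat) (q : K) (R : 'M[K]_(d * d)) : Prop :=
  q != 0 /\
  (R + 1%:M) *m (R - q%:M) = 0 /\
  heckeT 3 0 R *m heckeT 3 1 R *m heckeT 3 0 R
  = heckeT 3 1 R *m heckeT 3 0 R *m heckeT 3 1 R.
Arguments hecke_symmetry {d} q R.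

Definition hecke_hom (d1 d2 n : nat) (R1 : 'M[K]_(d1 * d1)) (R2 : 'M[K]_(d2 * d2))
  (F : 'M[K]_(d1 ^ n, d2 ^ n)) : Prop :=
  forall i, (i.+1 < n)%N -> heckeT n i R1 *m F = F *m heckeT n i R2.
Arguments hecke_hom {d1 d2} n R1 R2 F.

Definition hecke_submod (d n : nat) (R : 'M[K]_(d * d)) (U : 'M[K]_(d ^ n)) : Prop :=
  forall i, (i.+1 < n)%N -> stablemx U (heckeT n i R).
Arguments hecke_submod {d} n R U.

Definition hecke_summand (d n : nat) (R : 'M[K]_(d * d)) (U : 'M[K]_(d ^ n)) : Prop :=
  hecke_submod n R U /\
  exists W : 'M[K]_(d ^ n), hecke_submod n R W /\
    (U :&: W <= (0 : 'M[K]_(d ^ n)))%MS /\ (1%:M <= U + W)%MS.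
Arguments hecke_summand {d} n R U.

Definition hecke_indec_summand (d n : nat) (R : 'M[K]_(d * d)) (U : 'M[K]_(d ^ n)) : Prop :=
  hecke_summand n R U /\ U != 0 /\
  forall U1 U2 : 'M[K]_(d ^ n), hecke_submod n R U1 -> hecke_submod n R U2 ->
    (U1 :&: U2 <= (0 : 'M[K]_(d ^ n)))%MS -> (U1 + U2 == U)%MS -> U1 = 0 \/ U2 = 0.
Arguments hecke_indec_summand {d} n R U.

(* The submodule U of V1^{(x)n} is isomorphic (as H_n-module) to the
   submodule U' of V2^{(x)n}: some linear map f is injective on U, maps U onto U',
   and commutes with the action of every generator T_i on U. *)
Definition hecke_submod_iso (d1 d2 n : nat) (R1 : 'M[K]_(d1 * d1)) (R2 : 'M[K]_(d2 * d2))
  (U : 'M[K]_(d1 ^ n)) (U' : 'M[K]_(d2 ^ n)) : Prop :=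
  exists f : 'M[K]_(d1 ^ n, d2 ^ n),
    (U *m f == U')%MS /\ \rank (U *m f) = \rank U /\
    forall i, (i.+1 < n)%N -> forall u : 'rV[K]_(d1 ^ n), (u <= U)%MS ->
      u *m heckeT n i R1 *m f = u *m f *m heckeT n i R2.
Arguments hecke_submod_iso {d1 d2} n R1 R2 U U'.

Definition lin_form m n (phi : 'M[K]_(m, n) -> K) : Prop :=
  forall (c : K) x y, phi (c *: x + y) = c * phi x + phi y.
Arguments lin_form {m n} phi.

Definition bilin_form m1 n1 m2 n2 (beta : 'M[K]_(m1, n1) -> 'M[K]_(m2, n2) -> K) : Prop :=
  (forall y, lin_form (fun x => beta x y)) /\ (forall x, lin_form (beta x)).
Arguments bilin_form {m1 n1 m2 n2} beta.

(* Degree-n component of Delta_{R',R,R''}, with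
   A_n(R',R'') = Hom_{H_n}(V''^n, V'^n)^*,  A_n(R',R) = Hom_{H_n}(V^n, V'^n)^*,
   A_n(R,R'') = Hom_{H_n}(V''^n, V^n)^*, and
   A_n(R',R) (x) A_n(R,R'') = bilinear forms on Hom(V^n,V'^n) x Hom(V''^n,V^n):
   Delta(phi)(f, g) = phi(f o g), where f o g = G *m F in row convention. *)
Definition Delta_n (d d' d'' n : nat) (phi : 'M[K]_(d'' ^ n, d' ^ n) -> K)
  : 'M[K]_(d ^ n, d' ^ n) -> 'M[K]_(d'' ^ n, d ^ n) -> K :=
  fun F G => phi (G *m F).
Arguments Delta_n d {d' d'' n} phi F G.

(* beta lies in the degree-n part of the cotensor product
   A(R',R) \square_{A(R)} A(R,R''):  (rho (x) id) beta = (id (x) lambda) beta,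
   i.e. beta(f o c, g) = beta(f, c o g) for all H_n-morphisms f, c, g. *)
Definition cotensor_n (d d' d'' n : nat) (R : 'M[K]_(d * d)) (R' : 'M[K]_(d' * d'))
  (R'' : 'M[K]_(d'' * d''))
  (beta : 'M[K]_(d ^ n, d' ^ n) -> 'M[K]_(d'' ^ n, d ^ n) -> K) : Prop :=
  forall (F : 'M[K]_(d ^ n, d' ^ n)) (C : 'M[K]_(d ^ n, d ^ n)) (G : 'M[K]_(d'' ^ n, d ^ n)),
    hecke_hom n R R' F -> hecke_hom n R R C -> hecke_hom n R'' R G ->
    beta (C *m F) G = beta F (G *m C).
Arguments cotensor_n {d d' d''} n R R' R'' beta.

End Defs.

Arguments heckeT {K d} n i R.
Arguments hecke_symmetry {K d} q R.
Arguments hecke_hom {K d1 d2} n R1 R2 F.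
Arguments hecke_submod {K d} n R U.
Arguments hecke_summand {K d} n R U.
Arguments hecke_indec_summand {K d} n R U.
Arguments hecke_submod_iso {K d1 d2} n R1 R2 U U'.
Arguments lin_form {K m n} phi.
Arguments bilin_form {K m1 n1 m2 n2} beta.
Arguments Delta_n {K} d {d' d'' n} phi F G.
Arguments cotensor_n {K d d' d''} n R R' R'' beta.

(* Main.v *)
Require Import Defs.
From HB Require Import structures.
From mathcomp Require Import all_boot all_order all_algebra.
From mathcomp Require Import zify.
From Stdlib Require Import Classical.
Import GRing.Theory.
Local Open Scope ring_scope.

Module Aux.
Set Implicit Arguments. Unset Strict Implicit. Unset Printing Implicit Defensive.
Section Gen.
Variable K : fieldType.
Variable ok : nat -> Prop.

Definition ghom a b (TA : nat -> 'M[K]_a) (TB : nat -> 'M[K]_b) (F : 'M[K]_(a,b)) : Prop :=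
  forall i, ok i -> TA i *m F = F *m TB i.
Definition gsub a (TA : nat -> 'M[K]_a) (U : 'M[K]_a) : Prop :=
  forall i, ok i -> stablemx U (TA i).

Lemma ghomM a b c (TA : nat -> 'M[K]_a) (TB : nat -> 'M[K]_b) (TC : nat -> 'M[K]_c) F G :
  ghom TA TB F -> ghom TB TC G -> ghom TA TC (F *m G).
Proof. by move=> hF hG i oi; rewrite mulmxA hF // -mulmxA hG // mulmxA. Qed.

Lemma ghom_proj a (TA : nat -> 'M[K]_a) (U W : 'M[K]_a) :
  gsub TA U -> gsub TA W -> (U :&: W <= (0 : 'M[K]_a))%MS -> (1%:M <= U + W)%MS ->
  ghom TA TA (proj_mx U W).
Proof.
move=> sU sW; rewrite submx0 => /eqP cap h1 i oi.
case/sub_addsmxP: h1 => [[x y] /= e].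
suff: forall P : 'M[K]_a, (forall m (M : 'M[K]_(m, a)), (M <= U)%MS -> M *m P = M) ->
  (forall m (M : 'M[K]_(m, a)), (M <= W)%MS -> M *m P = 0) -> TA i *m P = P *m TA i.
  by apply=> m M; [exact: proj_mx_id | exact: proj_mx_0].
move=> P hid h0.
rewrite -[TA i *m _]mul1mx -[P *m _]mul1mx e !mulmxDl !mulmxA.
rewrite (hid _ _ (submxMl _ _)) (h0 _ _ (submxMl _ _)) mul0mx addr0.
rewrite (hid _ (x *m U *m TA i)) ?(h0 _ (y *m W *m TA i)) ?addr0 //.
  by rewrite -mulmxA mulmx_sub // sW.
by rewrite -mulmxA mulmx_sub // sU.
Qed.

Definition good a b (TA : nat -> 'M[K]_a) (TB : nat -> 'M[K]_b) (U : 'M[K]_a) : Prop :=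
  exists s : seq ('M[K]_(a,b) * 'M[K]_(b,a)),
    (forall p, p \in s -> ghom TA TB p.1 /\ ghom TB TA p.2) /\
    forall u : 'M[K]_a, (u <= U)%MS -> u *m \sum_(p <- s) (p.1 *m p.2) = u.

Lemma good0 a b (TA : nat -> 'M[K]_a) (TB : nat -> 'M[K]_b) : good TA TB 0.
Proof.
exists [::]; split => // u; rewrite submx0 => /eqP ->; by rewrite mul0mx.
Qed.

Lemma good_split a b (TA : nat -> 'M[K]_a) (TB : nat -> 'M[K]_b) (U U1 U2 p1 p2 : 'M[K]_a) :
  good TA TB U1 -> good TA TB U2 -> ghom TA TA p1 -> ghom TA TA p2 ->
  (forall v : 'M[K]_a, (v *m p1 <= U1)%MS) -> (forall v : 'M[K]_a, (v *m p2 <= U2)%MS) ->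
  (forall u : 'M[K]_a, (u <= U)%MS -> u *m p1 + u *m p2 = u) -> good TA TB U.
Proof.
case=> s1 [h1 e1] [s2 [h2 e2]] hp1 hp2 s1' s2' e.
exists ([seq (p1 *m x.1, x.2) | x <- s1] ++ [seq (p2 *m x.1, x.2) | x <- s2]).
split.
  move=> p; rewrite mem_cat; case/orP => /mapP [x xin ->] /=.
    by have [q1 q2] := h1 x xin; split => //; exact: (ghomM hp1 q1).
  by have [q1 q2] := h2 x xin; split => //; exact: (ghomM hp2 q1).
move=> u uU; rewrite big_cat !big_map /=.
have -> : \sum_(j <- s1) p1 *m j.1 *m j.2 = p1 *m \sum_(j <- s1) j.1 *m j.2.
  by rewrite mulmx_sumr; apply: eq_bigr => j _; rewrite mulmxA.
have -> : \sum_(j <- s2) p2 *m j.1 *m j.2 = p2 *m \sum_(j <- s2) j.1 *m j.2.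
  by rewrite mulmx_sumr; apply: eq_bigr => j _; rewrite mulmxA.
by rewrite mulmxDr !mulmxA e1 // e2 // e.
Qed.

Lemma rows_ext a b m (U : 'M[K]_a) (X Y : 'M[K]_(a, b)) :
  (forall u : 'rV[K]_a, (u <= U)%MS -> u *m X = u *m Y) ->
  forall M : 'M[K]_(m, a), (M <= U)%MS -> M *m X = M *m Y.
Proof.
move=> h M hM; apply/row_matrixP => k; rewrite !row_mul; apply: h.
exact: submx_trans (row_sub k M) hM.
Qed.

Lemma good_iso a b (TA : nat -> 'M[K]_a) (TB : nat -> 'M[K]_b)
  (U W : 'M[K]_a) (U' W' : 'M[K]_b) (f : 'M[K]_(a, b)) :
  gsub TA U -> gsub TA W -> (U :&: W <= (0 : 'M[K]_a))%MS -> (1%:M <= U + W)%MS ->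
  gsub TB U' -> gsub TB W' -> (U' :&: W' <= (0 : 'M[K]_b))%MS -> (1%:M <= U' + W')%MS ->
  (U *m f == U')%MS -> \rank (U *m f) = \rank U ->
  (forall i, ok i -> forall u : 'rV[K]_a, (u <= U)%MS -> u *m TA i *m f = u *m f *m TB i) ->
  good TA TB U.
Proof.
move=> sU sW cUW hUW sU' sW' cUW' hUW' eUf rUf hf.
have [g hg] : exists g : 'M[K]_(b, a), forall m (u : 'M[K]_(m, a)), (u <= U)%MS -> u *m f *m g = u.
  set B := row_base U.
  have rf : row_free (B *m f).
    rewrite /row_free (eqmx_rank (_ : (B *m f == U *m f)%MS)) ?rUf //.
    by apply/eqmxP; apply: eqmxMr; exact: eq_row_base.
  case/row_freeP: rf => h hh; exists (h *m B) => m u uU.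
  rewrite -(eq_row_base U) -/B in uU; clearbody B; case/submxP: uU => D ->.
  by rewrite -!mulmxA (mulmxA B) (mulmxA (B *m f)) hh mul1mx.
have hf' : forall i, ok i -> forall m (M : 'M[K]_(m, a)), (M <= U)%MS -> M *m TA i *m f = M *m f *m TB i.
  move=> i oi m M hM; rewrite -!mulmxA; apply: (rows_ext _ hM) => u hu.
  by rewrite !mulmxA hf.
move: (cUW'); rewrite submx0 => /eqP cUW'0.
move: (cUW); rewrite submx0 => /eqP cUW0.
have hU'f : (U' <= U *m f)%MS by case/andP: eUf.
have hUf' : (U *m f <= U')%MS by case/andP: eUf.
have piU : (proj_mx U W <= U)%MS by rewrite -[proj_mx U W]mul1mx proj_mx_sub.
have rhoU : (proj_mx U' W' <= U')%MS by rewrite -[proj_mx U' W']mul1mx proj_mx_sub.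
exists [:: (proj_mx U W *m f, proj_mx U' W' *m g)]; split.
  move=> p; rewrite inE => /eqP -> /=; split.
    move=> i oi; rewrite mulmxA (ghom_proj sU sW cUW hUW) // -mulmxA.
    by rewrite !mulmxA (hf' _ oi _ _ piU).
  move=> i oi; rewrite mulmxA (ghom_proj sU' sW' cUW' hUW') //.
  have : (proj_mx U' W' <= U *m f)%MS by apply: submx_trans hU'f.
  case/submxP => D ->.
  have DU : (D *m U <= U)%MS by apply: submxMl.
  rewrite mulmxA -(hf' _ oi _ _ DU) (hg _ (D *m U)) // hg //.
  by rewrite -mulmxA mulmx_sub // sU.
move=> u uU; rewrite big_seq1 /=.
have -> : u *m (proj_mx U W *m f *m (proj_mx U' W' *m g)) =
  u *m proj_mx U W *m f *m proj_mx U' W' *m g by rewrite !mulmxA.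
rewrite (proj_mx_id cUW0 uU) (proj_mx_id cUW'0) ?hg //.
case/submxP: uU => D ->; rewrite -mulmxA; apply: submx_trans hUf'; exact: submxMl.
Qed.

Definition gsummand a (TA : nat -> 'M[K]_a) (U : 'M[K]_a) : Prop :=
  gsub TA U /\ exists W : 'M[K]_a, gsub TA W /\
    (U :&: W <= (0 : 'M[K]_a))%MS /\ (1%:M <= U + W)%MS.
Definition gindec a (TA : nat -> 'M[K]_a) (U : 'M[K]_a) : Prop :=
  gsummand TA U /\ U != 0 /\
  forall U1 U2 : 'M[K]_a, gsub TA U1 -> gsub TA U2 ->
    (U1 :&: U2 <= (0 : 'M[K]_a))%MS -> (U1 + U2 == U)%MS -> U1 = 0 \/ U2 = 0.
Definition giso a b (TA : nat -> 'M[K]_a) (TB : nat -> 'M[K]_b) (U : 'M[K]_a) (U' : 'M[K]_b) : Prop :=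
  exists f : 'M[K]_(a, b),
    (U *m f == U')%MS /\ \rank (U *m f) = \rank U /\
    forall i, ok i -> forall u : 'rV[K]_a, (u <= U)%MS ->
      u *m TA i *m f = u *m f *m TB i.

Lemma split_compl a (TA : nat -> 'M[K]_a) (U U1 U2 W : 'M[K]_a) :
  gsub TA U1 -> gsub TA U2 -> gsub TA W -> (U1 :&: U2 <= (0 : 'M[K]_a))%MS ->
  (U1 + U2 == U)%MS -> (U :&: W <= (0 : 'M[K]_a))%MS -> (1%:M <= U + W)%MS ->
  [/\ gsub TA (U2 + W)%MS, (U1 :&: (U2 + W) <= (0 : 'M[K]_a))%MS & (1%:M <= U1 + (U2 + W))%MS].
Proof.
move=> s1 s2 sW c12 /andP [e12 e21] cUW hUW.
have U1U : (U1 <= U)%MS by apply: submx_trans e12; exact: addsmxSl.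
split.
- move=> i oi; rewrite addsmxMr; apply: addsmxS; [exact: s2 | exact: sW].
- set X := (U1 :&: (U2 + W))%MS.
  have XU1 : (X <= U1)%MS by exact: capmxSl.
  have : (X <= U2 + W)%MS by exact: capmxSr.
  case/sub_addsmxP => [[y z] /= eX].
  have zW : (z *m W <= U :&: W)%MS.
    rewrite sub_capmx submxMl andbT.
    have -> : z *m W = X - y *m U2 by rewrite eX addrAC subrr add0r.
    apply: addmx_sub; first exact: submx_trans XU1 U1U.
    rewrite eqmx_opp; apply: submx_trans e12; apply: submx_trans (addsmxSr U1 U2).
    exact: submxMl.
  have zW0 : z *m W = 0 by apply/eqP; rewrite -submx0; exact: submx_trans zW cUW.
  apply: submx_trans c12; rewrite sub_capmx XU1 /= eX zW0 addr0; exact: submxMl.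
- rewrite addsmxA; apply: submx_trans hUW _; apply: addsmxS => //.
Qed.

Lemma good_summands a b (TA : nat -> 'M[K]_a) (TB : nat -> 'M[K]_b) :
  (forall U, gindec TA U -> exists U', gsummand TB U' /\ giso TA TB U U') ->
  forall U, gsummand TA U -> good TA TB U.
Proof.
move=> H U; move: {2}(\rank U) (leqnn (\rank U)) => r; elim: r U => [|r IH] U hr hU.
  by move: hr; rewrite leqn0 mxrank_eq0 => /eqP ->; exact: good0.
have [->|U0] := eqVneq U 0; first exact: good0.
case: (classic (exists U1 U2 : 'M[K]_a, [/\ gsub TA U1, gsub TA U2,
   (U1 :&: U2 <= (0 : 'M[K]_a))%MS, (U1 + U2 == U)%MS & (U1 != 0) && (U2 != 0)]))
  => [[U1 [U2 [s1 s2 c12 e12 /andP [n1 n2]]]]|nod].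
  case: hU => sU [W [sW [cUW hUW]]].
  have [sW1 c1 h1] := split_compl s1 s2 sW c12 e12 cUW hUW.
  have e21 : (U2 + U1 == U)%MS by rewrite addsmxC.
  have c21 : (U2 :&: U1 <= (0 : 'M[K]_a))%MS by rewrite capmxC.
  have [sW2 c2 h2] := split_compl s2 s1 sW c21 e21 cUW hUW.
  have rk : (\rank U1 + \rank U2 = \rank U)%N.
    rewrite -mxrank_sum_cap (eqmx_rank e12).
    by move: (c12); rewrite submx0 -mxrank_eq0 => /eqP ->; rewrite addn0.
  have p1 : (0 < \rank U1)%N by rewrite lt0n mxrank_eq0.
  have p2 : (0 < \rank U2)%N by rewrite lt0n mxrank_eq0.
  have r1 : (\rank U1 <= r)%N by rewrite -ltnS; apply: leq_trans hr; rewrite -rk -addn1 leq_add2l.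
  have r2 : (\rank U2 <= r)%N by rewrite -ltnS; apply: leq_trans hr; rewrite -rk -add1n leq_add2r.
  have g1 := IH U1 r1 (conj s1 (ex_intro _ _ (conj sW1 (conj c1 h1)))).
  have g2 := IH U2 r2 (conj s2 (ex_intro _ _ (conj sW2 (conj c2 h2)))).
  apply: (good_split g1 g2 (ghom_proj s1 sW1 c1 h1) (ghom_proj s2 sW2 c2 h2)).
  - by move=> v; exact: proj_mx_sub.
  - by move=> v; exact: proj_mx_sub.
  move=> u uU.
  move: c1 c2; rewrite !submx0 => /eqP c1 /eqP c2.
  have : (u <= U1 + U2)%MS by apply: submx_trans uU _; case/andP: e12.
  case/sub_addsmxP => [[y z] /= ->].
  rewrite !mulmxDl (proj_mx_id c1 (submxMl _ _)) (proj_mx_0 c1); last first.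
    by apply: submx_trans (addsmxSl U2 W); exact: submxMl.
  rewrite (proj_mx_id c2 (submxMl _ _)) (proj_mx_0 c2); last first.
    by apply: submx_trans (addsmxSl U1 W); exact: submxMl.
  by rewrite addr0 add0r.
have hi : gindec TA U.
  split=> //; split=> // U1 U2 s1 s2 c12 e12.
  have [->|n1] := eqVneq U1 0; first by left.
  have [->|n2] := eqVneq U2 0; first by right.
  by exfalso; apply: nod; exists U1, U2; split => //; rewrite n1 n2.
have [U' [[sU' [W' [sW' [c' h']]]] [f [ef [rf hf]]]]] := H U hi.
case: hU => sU [W [sW [c h]]].
exact: (good_iso sU sW c h sU' sW' c' h' ef rf hf).
Qed.

End Gen.

Section Lin.
Variable K : fieldType.
Variables m n : nat.
Variable phi : 'M[K]_(m, n) -> K.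
Hypothesis hphi : lin_form phi.

Lemma lin0 : phi 0 = 0.
Proof.
have e := hphi 1 0 0; rewrite scaler0 addr0 mul1r in e.
apply: (@addrI _ (phi 0)); by rewrite addr0 -e.
Qed.

Lemma linD x y : phi (x + y) = phi x + phi y.
Proof. by have := hphi 1 x y; rewrite scale1r mul1r. Qed.

Lemma lin_sum (I : Type) (s : seq I) (f : I -> 'M[K]_(m, n)) :
  phi (\sum_(i <- s) f i) = \sum_(i <- s) phi (f i).
Proof.
elim: s => [|x s IH]; first by rewrite !big_nil lin0.
by rewrite !big_cons linD IH.
Qed.
End Lin.

Lemma key_big (K : fieldType) (d d' m : nat) (R : 'M[K]_(d * d)) (R' : 'M[K]_(d' * d'))
  (hs : forall U : 'M[K]_(d' ^ m), hecke_indec_summand m R' U ->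
       exists U' : 'M[K]_(d ^ m), hecke_summand m R U' /\ hecke_submod_iso m R' R U U') :
  exists s : seq ('M[K]_(d' ^ m, d ^ m) * 'M[K]_(d ^ m, d' ^ m)),
    (forall p, p \in s -> hecke_hom m R' R p.1 /\ hecke_hom m R R' p.2) /\
    \sum_(p <- s) p.1 *m p.2 = 1%:M.
Proof.
have := @good_summands K (fun i => (i.+1 < m)%N) _ _ (fun i => heckeT m i R')
  (fun i => heckeT m i R) hs 1%:M.
case.
  split; first by move=> i _; exact: submx1.
  exists 0; split; first by move=> i _; rewrite mul0mx; exact: sub0mx.
  by rewrite capmx0 submx_refl addsmxSl.
move=> s [hs' e]; exists s; split => //.
by rewrite -[LHS]mul1mx e // submx_refl.
Qed.

End Aux.
Import Aux.
Unset Implicit Arguments.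

Theorem lemma7p1 (K : fieldType) (q : K) (d d' d'' : nat)
  (R : 'M[K]_(d * d)) (R' : 'M[K]_(d' * d')) (R'' : 'M[K]_(d'' * d''))
  (hR : hecke_symmetry q R) (hR' : hecke_symmetry q R') (hR'' : hecke_symmetry q R'')
  (hsum : forall n : nat, (1 < n)%N ->
     forall U : 'M[K]_(d' ^ n), hecke_indec_summand n R' U ->
       exists U' : 'M[K]_(d ^ n), hecke_summand n R U' /\ hecke_submod_iso n R' R U U') :
  forall n : nat,
    (* Delta maps A_n(R',R'') into the cotensor product *)
    (forall phi : 'M[K]_(d'' ^ n, d' ^ n) -> K, lin_form phi ->
       cotensor_n n R R' R'' (Delta_n d phi)) /\
    (* Delta is injective on A_n(R',R'') = Hom_{H_n}(V''^n, V'^n)^* *)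
    (forall phi : 'M[K]_(d'' ^ n, d' ^ n) -> K, lin_form phi ->
       (forall F G, hecke_hom n R R' F -> hecke_hom n R'' R G -> Delta_n d phi F G = 0) ->
       forall H, hecke_hom n R'' R' H -> phi H = 0) /\
    (* every element of the cotensor product is in the image of Delta *)
    (forall beta : 'M[K]_(d ^ n, d' ^ n) -> 'M[K]_(d'' ^ n, d ^ n) -> K,
       bilin_form beta -> cotensor_n n R R' R'' beta ->
       exists phi : 'M[K]_(d'' ^ n, d' ^ n) -> K, lin_form phi /\
         forall F G, hecke_hom n R R' F -> hecke_hom n R'' R G ->
           Delta_n d phi F G = beta F G).
Proof.
move=> n.
have hom_mul : forall d1 d2 d3 (R1 : 'M[K]_(d1 * d1)) (R2 : 'M[K]_(d2 * d2))
    (R3 : 'M[K]_(d3 * d3)) (F : 'M[K]_(d1 ^ n, d2 ^ n)) (G : 'M[K]_(d2 ^ n, d3 ^ n)),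
    hecke_hom n R1 R2 F -> hecke_hom n R2 R3 G -> hecke_hom n R1 R3 (F *m G).
  move=> d1 d2 d3 R1 R2 R3 F G hF hG.
  exact: (@ghomM K (fun i => (i.+1 < n)%N) _ _ _ (fun i => heckeT n i R1)
    (fun i => heckeT n i R2) (fun i => heckeT n i R3) F G hF hG).
have [s [hs es]] : exists s : seq ('M[K]_(d' ^ n, d ^ n) * 'M[K]_(d ^ n, d' ^ n)),
    (forall p, p \in s -> hecke_hom n R' R p.1 /\ hecke_hom n R R' p.2) /\
    \sum_(p <- s) p.1 *m p.2 = 1%:M.
  case: (ltnP 1 n) => hn; first exact: (key_big (hsum n hn)).
  case: (posnP (d ^ n)) => hd.
    case: (posnP (d' ^ n)) => hd'.
      exists [::]; split => //; rewrite big_nil.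
      by apply/matrixP => i j; have := ltn_ord i; rewrite {2}hd'.
    exfalso.
    have /andP [/eqP d0 n0] : (d == 0)%N && (0 < n)%N by rewrite -expn_eq0 hd.
    have d'0 : (0 < d')%N by move: hd'; rewrite expn_gt0 => /orP [] // /eqP n00; rewrite n00 in n0.
    have [s [_ es]] := key_big (hsum 2 isT).
    have z : forall (P : 'M[K]_(d' ^ 2, d ^ 2)) (F : 'M[K]_(d ^ 2, d' ^ 2)), P *m F = 0.
      move=> P F; apply/matrixP => i j; rewrite !mxE big1 // => k _.
      have h2 : (d ^ 2 = 0)%N by rewrite d0.
      have : (nat_of_ord k < d ^ 2)%N := ltn_ord k.
      by rewrite [X in (_ < X)%N]h2.
    rewrite big1 in es; last by move=> p _; exact: z.
    have pos : (0 < d' ^ 2)%N by rewrite expn_gt0 d'0.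
    move/matrixP: es => /(_ (Ordinal pos) (Ordinal pos)).
    by rewrite !mxE eqxx /= => /eqP; rewrite eq_sym oner_eq0.
  pose k := Ordinal hd.
  exists [seq (delta_mx i k, delta_mx k i) | i <- index_enum 'I_(d' ^ n)]; split.
    by move=> p _; split => i hi; move: (leq_trans hi hn).
  rewrite big_map mx1_sum_delta; apply: eq_bigr => i _ /=.
  exact: mul_delta_mx.
split.
  move=> phi _ F C G _ _ _; rewrite /Delta_n; by rewrite !mulmxA.
split.
  move=> phi hphi hz H hH.
  rewrite -[H]mulmx1 -es mulmx_sumr (lin_sum hphi) big_seq big1 // => p pin.
  have [h1 h2] := hs p pin.
  rewrite mulmxA; exact: (hz p.2 (H *m p.1) h2 (hom_mul _ _ _ _ _ _ _ _ hH h1)).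
move=> beta [hb1 hb2] hcot.
exists (fun X => \sum_(p <- s) beta p.2 (X *m p.1)); split.
  move=> c X Y; rewrite mulr_sumr -big_split; apply: eq_bigr => p _ /=.
  by rewrite mulmxDl -scalemxAl hb2.
move=> F G hF hG; rewrite /Delta_n.
transitivity (\sum_(p <- s) beta (F *m p.1 *m p.2) G).
  rewrite big_seq [RHS]big_seq; apply: eq_bigr => p pin; have [h1 h2] := hs p pin.
  by rewrite (hcot _ _ _ h2 (hom_mul _ _ _ _ _ _ _ _ hF h1) hG) mulmxA.
have := lin_sum (hb1 G) s (fun p => F *m p.1 *m p.2); move=> /= <-.
have -> : \sum_(p <- s) F *m p.1 *m p.2 = F *m \sum_(p <- s) p.1 *m p.2.
  by rewrite mulmx_sumr; apply: eq_bigr => p _; rewrite mulmxA.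
by rewrite es mulmx1.
Qed.
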